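(* Let $\eta>0$ be fixed. For all $A\ge2$, $$ \sum_{n\ge 1}A^n\rho(n)\ll \exp\left(\frac{(1+\eta)A}{\log A}\right), $$ where the implied constant depends only on $\eta$.
   Context: $\rho$ denotes the Dickman--de Bruijn function: the continuous function on $[0,\infty)$ with $\rho(t)=1$ for $0\le t\le 1$ and $t\rho'(t)=-\rho(t-1)$ for $t>1$. The sum is over positive integers $n$. *)

(* Defs.v *)
From Stdlib Require Import Reals.
From Coquelicot Require Import Coquelicot.
Open Scope R_scope.

Definition is_dickman (rho : R -> R) : Prop :=
  (forall t, 0 <= t ->
     filterlim rho (within (fun x => 0 <= x) (locally t)) (locally (rho t))) /\
  (forall t, 0 <= t <= 1 -> rho t = 1) /\
  (forall t, 1 < t -> ex_derive rho t /\ t * Derive rho t = - rho (t - 1)).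

(* Main.v *)
Require Import Defs.
From Stdlib Require Import Reals.
From Coquelicot Require Import Coquelicot.
From Stdlib Require Import Lra Lia ZArith.
Open Scope R_scope.

Fixpoint sumR (f : nat -> R) (n : nat) : R :=
  match n with O => 0 | S n => sumR f n + f n end.

Lemma sumR_ext f g n : (forall i, (i < n)%nat -> f i = g i) -> sumR f n = sumR g n.
Proof. induction n; simpl; intros H; auto. rewrite IHn, H; auto. Qed.

Lemma sumR_le f g n : (forall i, (i < n)%nat -> f i <= g i) -> sumR f n <= sumR g n.
Proof. induction n; simpl; intros H; [lra|]. assert (f n <= g n) by auto.
  assert (sumR f n <= sumR g n) by auto. lra. Qed.

Lemma sumR_plus f g n : sumR (fun i => f i + g i) n = sumR f n + sumR g n.
Proof. induction n; simpl; [lra|]. rewrite IHn; lra. Qed.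

Lemma sumR_scal c f n : sumR (fun i => c * f i) n = c * sumR f n.
Proof. induction n; simpl; [lra|]. rewrite IHn; lra. Qed.

Lemma sumR_nonneg f n : (forall i, 0 <= f i) -> 0 <= sumR f n.
Proof. induction n; simpl; intros H; [lra|]. specialize (IHn H). specialize (H n). lra. Qed.

Lemma sumR_mono f n p : (forall i, 0 <= f i) -> (p <= n)%nat -> sumR f p <= sumR f n.
Proof. intros H Hp. induction Hp; [lra|]. simpl. specialize (H m). lra. Qed.

Lemma sumR_term f n k : (forall i, 0 <= f i) -> (k < n)%nat -> f k <= sumR f n.
Proof. intros H Hk.
  apply (Rle_trans _ (sumR f (S k))). simpl. pose proof (sumR_nonneg f k H). lra.
  apply sumR_mono; auto. Qed.

Lemma sumR_swap (f : nat -> nat -> R) n m :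
  sumR (fun k => sumR (fun i => f k i) m) n = sumR (fun i => sumR (fun k => f k i) n) m.
Proof. induction n; simpl.
  - induction m; simpl; lra.
  - rewrite IHn. rewrite <- sumR_plus. reflexivity. Qed.

Lemma derive_poly (a : nat -> R) N z :
  is_derive (fun x => sumR (fun k => a k * x ^ k) N) z
            (sumR (fun k => a k * (INR k * z ^ pred k)) N).
Proof. induction N; simpl.
  - auto_derive; auto.
  - apply (is_derive_plus (fun x => sumR (fun k => a k * x ^ k) N) (fun x => a N * x ^ N)); auto.
    auto_derive; auto. ring. Qed.

Lemma derive_Q m z :
  is_derive (fun x => sumR (fun i => x ^ (i+1) / INR (i+1)) m) z (sumR (fun i => z ^ i) m).
Proof. induction m; simpl.
  - auto_derive; auto.
  - apply (is_derive_plus (fun x => sumR (fun i => x ^ (i+1) / INR (i+1)) m) (fun x => x ^ (m+1) / INR (m+1))); auto.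
    auto_derive. { auto. }
    replace (Init.Nat.pred (m+1)) with m by lia. field. apply not_0_INR; lia. Qed.

Definition Tw (r : nat -> R) k i := if (i + 1 <=? k)%nat then r (k - (i+1))%nat else 0.
Definition PP (r : nat -> R) z n := sumR (fun k => r k * z ^ k) n.

Lemma gf_ident r m z N :
  sumR (fun k => z ^ k * sumR (fun i => Tw r k i) m) N =
  sumR (fun i => z ^ (i+1) * PP r z (N - (i+1))) m.
Proof.
  rewrite (sumR_ext _ (fun k => sumR (fun i => z ^ k * Tw r k i) m)).
  2:{ intros; rewrite sumR_scal; auto. }
  rewrite sumR_swap. apply sumR_ext. intros i _.
  induction N; cbn [sumR].
  - replace (0 - (i+1))%nat with 0%nat by lia. unfold PP; cbn [sumR]; ring.
  - rewrite IHN. unfold Tw. destruct (Nat.leb_spec (i+1) N).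
    + replace (S N - (i+1))%nat with (S (N - (i+1))) by lia. unfold PP; cbn [sumR].
      replace (z ^ N) with (z ^ (i+1) * z ^ (N - (i+1))). ring.
      rewrite <- pow_add. f_equal. lia.
    + replace (S N - (i+1))%nat with (N - (i+1))%nat by lia. ring.
Qed.

Lemma PP_nonneg r z n : (forall k, 0 <= r k) -> 0 <= z -> 0 <= PP r z n.
Proof. intros. apply sumR_nonneg. intros; apply Rmult_le_pos; auto. apply pow_le; auto. Qed.

Lemma PP_mono r z n p : (forall k, 0 <= r k) -> 0 <= z -> (p <= n)%nat -> PP r z p <= PP r z n.
Proof. intros. apply sumR_mono; auto. intros; apply Rmult_le_pos; auto. apply pow_le; auto. Qed.

Lemma PP_zero r n : r 0%nat <= 1 -> (forall k, 0 <= r k) -> PP r 0 n <= 1.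
Proof. intros H0 Hp. unfold PP. induction n; cbn [sumR]; [lra|].
  destruct n. simpl. lra. rewrite pow_i by lia. lra. Qed.

Lemma is_derive_eq (f : R -> R) x l l' : is_derive f x l -> l = l' -> is_derive f x l'.
Proof. intros; subst; auto. Qed.

Lemma sumR_zero n : sumR (fun _ => 0) n = 0.
Proof. induction n; simpl; [reflexivity| rewrite IHn; ring]. Qed.

Lemma gf_bound (r : nat -> R) (m : nat) :
  (forall k, 0 <= r k) -> r 0%nat <= 1 ->
  (forall k, INR k * r k <= sumR (fun i => Tw r k i) m) ->
  forall N z, 0 <= z -> PP r z N <= exp (sumR (fun i => z ^ (i+1) / INR (i+1)) m).
Proof.
  intros Hpos H0 Hrec N z Hz.
  set (Q := fun x => sumR (fun i => x ^ (i+1) / INR (i+1)) m).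
  set (dQ := fun x => sumR (fun i => x ^ i) m).
  set (P := fun x => PP r x N).
  set (dP := fun x => sumR (fun k => r k * (INR k * x ^ pred k)) N).
  set (H := fun x => P x * exp (- Q x)).
  set (dH := fun x => dP x * exp (- Q x) + P x * (exp (- Q x) * (- dQ x))).
  assert (HD : forall x, is_derive H x (dH x)).
  { intro x. unfold H, dH.
    eapply is_derive_eq.
    apply (is_derive_mult P (fun x => exp (- Q x))).
    - apply derive_poly.
    - apply (is_derive_comp exp (fun x => - Q x)). apply is_derive_exp.
      apply (is_derive_opp Q). apply derive_Q.
    - intros; apply Rmult_comm.
    - simpl. unfold scal, mult, plus, opp; simpl. unfold mult, plus, opp; simpl. unfold dP, dQ. ring. }
  assert (Hsign : forall c, 0 < c -> dH c <= 0).
  { intros c Hc. unfold dH.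
    assert (dP c <= P c * dQ c).
    { apply Rmult_le_reg_l with c; auto.
      assert (E1 : c * dP c = sumR (fun k => r k * INR k * c ^ k) N).
      { unfold dP. rewrite <- sumR_scal. apply sumR_ext. intros k _.
        destruct k; simpl. ring. ring. }
      assert (E2 : c * (P c * dQ c) = P c * sumR (fun i => c ^ (i+1)) m).
      { transitivity (P c * (c * dQ c)). ring. f_equal.
        unfold dQ. rewrite <- sumR_scal.
        apply sumR_ext. intros i _. rewrite pow_add. simpl. ring. }
      rewrite E1, E2.
      apply Rle_trans with (sumR (fun k => c ^ k * sumR (fun i => Tw r k i) m) N).
      { apply sumR_le. intros k _. rewrite (Rmult_comm (c ^ k)).
        apply Rmult_le_compat_r. apply pow_le; lra. rewrite Rmult_comm; auto. }
      rewrite gf_ident. rewrite <- sumR_scal. apply sumR_le. intros i Hi.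
      rewrite (Rmult_comm (P c)). apply Rmult_le_compat_l. apply pow_le; lra.
      apply PP_mono; auto; try lra; lia. }
    pose proof (exp_pos (- Q c)). nra. }
  assert (Q0 : Q 0 = 0).
  { unfold Q. rewrite (sumR_ext _ (fun _ => 0)). apply sumR_zero.
    intros; rewrite pow_i; [|lia]. unfold Rdiv; ring. }
  assert (H0' : H 0 <= 1).
  { unfold H. rewrite Q0, Ropp_0, exp_0, Rmult_1_r. apply PP_zero; auto. }
  assert (Hz1 : H z <= 1).
  { destruct (Req_dec z 0) as [Z|Z]. subst z; auto.
    destruct (MVT_cor2 H dH 0 z) as [c [E Hc]].
    + lra.
    + intros; apply is_derive_Reals; apply HD.
    + pose proof (Hsign c (proj1 Hc)). nra. }
  unfold H in Hz1. fold (P z).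
  replace (P z) with (P z * exp (- Q z) * exp (Q z)).
  2:{ rewrite Rmult_assoc, <- exp_plus. replace (- Q z + Q z) with 0 by ring. rewrite exp_0; ring. }
  pose proof (exp_pos (Q z)). fold (Q z). nra.
Qed.

Lemma nat_above x : exists n : nat, x <= INR n.
Proof. destruct (archimed x) as [H1 H2].
  destruct (Z_le_gt_dec 0 (up x)).
  - exists (Z.to_nat (up x)). rewrite INR_IZR_INZ, Z2Nat.id; [lra|lia].
  - exists 0%nat. simpl. assert (up x < 0)%Z as g2 by lia. apply IZR_lt in g2. lra. Qed.

Lemma cont_of_eps (f : R -> R) x :
  (forall eps, eps > 0 -> exists d, d > 0 /\ forall y, Rabs (y - x) < d -> Rabs (f y - f x) < eps) ->
  continuous f x.
Proof. intros H. apply continuity_pt_filterlim. intros eps Heps.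
  destruct (H eps Heps) as [d [Hd Hy]]. exists d; split; auto.
  intros y [_ Hy']. apply Hy. exact Hy'. Qed.

Section Rho.
Variable rho : R -> R.
Hypothesis Hd : is_dickman rho.

Lemma cont_eps t : 0 <= t -> forall eps, eps > 0 -> exists d, d > 0 /\
  forall x, 0 <= x -> Rabs (x - t) < d -> Rabs (rho x - rho t) < eps.
Proof. intros Ht eps He. destruct Hd as [Hc _].
  specialize (Hc t Ht). apply filterlim_locally with (eps := mkposreal eps He) in Hc.
  destruct Hc as [d Hdd]. exists d; split. apply cond_pos.
  intros x Hx Hxt. apply (Hdd x Hxt Hx). Qed.

Definition rt x := if Rle_dec 0 x then rho x else 1.

Lemma rt_eq x : 0 <= x -> rt x = rho x.
Proof. intros; unfold rt; destruct (Rle_dec 0 x); [auto|lra]. Qed.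

Lemma rho_one x : 0 <= x <= 1 -> rho x = 1.
Proof. destruct Hd as [_ [H _]]; auto. Qed.

Lemma rt_cont x : continuous rt x.
Proof. apply cont_of_eps. intros eps He.
  destruct (Rlt_dec 0 x).
  - destruct (cont_eps x (Rlt_le _ _ r) eps He) as [d [Hd0 Hy]].
    exists (Rmin d x). split. apply Rmin_pos; lra.
    intros y Hyx. assert (Rabs (y - x) < d) by (eapply Rlt_le_trans; [apply Hyx| apply Rmin_l]).
    assert (Rabs (y - x) < x) by (eapply Rlt_le_trans; [apply Hyx| apply Rmin_r]).
    apply Rabs_def2 in H0. rewrite !rt_eq by lra. apply Hy; lra.
  - destruct (Req_dec x 0).
    + subst x. destruct (cont_eps 0 (Rle_refl 0) eps He) as [d [Hd0 Hy]].
      exists d; split; auto. intros y Hy'. rewrite (rt_eq 0) by lra.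
      unfold rt. destruct (Rle_dec 0 y). apply Hy; auto.
      rewrite rho_one by lra. rewrite Rminus_diag, Rabs_R0; lra.
    + exists (-x); split. lra. intros y Hy'. apply Rabs_def2 in Hy'.
      unfold rt. destruct (Rle_dec 0 y); [lra|]. destruct (Rle_dec 0 x); [lra|].
      rewrite Rminus_diag, Rabs_R0; lra.
Qed.

Lemma rho_cont x : 0 < x -> continuity_pt rho x.
Proof. intros Hx. apply continuity_pt_filterlim. apply cont_of_eps. intros eps He.
  destruct (cont_eps x (Rlt_le _ _ Hx) eps He) as [d [Hd0 Hy]].
  exists (Rmin d x). split. apply Rmin_pos; lra.
  intros y Hyx. assert (Rabs (y - x) < d) by (eapply Rlt_le_trans; [apply Hyx| apply Rmin_l]).
  assert (Rabs (y - x) < x) by (eapply Rlt_le_trans; [apply Hyx| apply Rmin_r]).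
  apply Rabs_def2 in H0. apply Hy; lra. Qed.

Lemma rt_int a b : ex_RInt rt a b.
Proof. apply (ex_RInt_continuous (V:=R_CompleteNormedModule)). intros; apply rt_cont. Qed.

Lemma rho_deriv x : 1 < x -> is_derive rho x (- rho (x - 1) / x).
Proof. intros Hx. destruct Hd as [_ [_ H]]. destruct (H x Hx) as [He Hq].
  replace (- rho (x-1) / x) with (Derive rho x). apply Derive_correct; auto.
  rewrite <- Hq. field. lra. Qed.

Definition F x := RInt rt 0 x.

Lemma F_deriv x : is_derive F x (rt x).
Proof. apply is_derive_RInt with (a := 0). apply filter_forall. intros; apply RInt_correct, rt_int.
  apply rt_cont. Qed.

Lemma ident t : 1 <= t -> t * rho t = RInt rt (t - 1) t.
Proof.
  intros Ht.
  set (Phi := fun x => x * rt x - (F x - F (x - 1))).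
  assert (E : Phi t = Phi 1).
  { destruct (Req_dec t 1). subst; auto.
    destruct (MVT_gen Phi 1 t (fun _ => 0)) as [c [_ Hc]].
    - rewrite Rmin_left, Rmax_right by lra. intros x Hx.
      assert (Hl : locally x (fun y => rho y = rt y)).
      { exists (mkposreal x ltac:(lra)). intros y Hy. simpl in Hy.
        change (Rabs (y - x) < x) in Hy. apply Rabs_def2 in Hy. rewrite rt_eq; lra. }
      eapply is_derive_eq.
      + unfold Phi. apply (is_derive_minus (fun x => x * rt x) (fun x => F x - F (x-1))).
        * apply (is_derive_mult (fun x => x) rt). apply is_derive_id.
          apply (is_derive_ext_loc rho). apply Hl. apply rho_deriv; lra.
          intros; apply Rmult_comm.
        * apply (is_derive_minus F (fun x => F (x - 1))). apply F_deriv.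
          apply (is_derive_comp F (fun x => x - 1)). apply F_deriv.
          auto_derive; auto.
      + simpl. unfold minus, plus, opp, mult, scal, one; simpl. unfold mult, plus, opp; simpl.
        rewrite !rt_eq by lra. field. lra.
    - rewrite Rmin_left, Rmax_right by lra. intros x Hx.
      apply continuity_pt_filterlim. unfold Phi.
      apply (continuous_minus (fun x => x * rt x) (fun x => F x - F (x - 1))).
      + apply (continuous_mult (fun x => x) rt). apply continuous_id. apply rt_cont.
      + apply (continuous_minus F (fun x => F (x - 1))).
        apply (ex_derive_continuous F). eexists; apply F_deriv.
        apply (continuous_comp (fun x => x - 1) F).
        apply (ex_derive_continuous (fun x => x - 1)). auto_derive; auto.
        apply (ex_derive_continuous F). eexists; apply F_deriv.
    - lra. }
  assert (P1 : Phi 1 = 0).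
  { unfold Phi, F. rewrite rt_eq, rho_one by lra. replace (1 - 1) with 0 by ring.
    rewrite RInt_point. rewrite (RInt_ext rt (fun _ => 1)). rewrite RInt_const.
    unfold scal, zero; simpl. unfold mult; simpl. ring.
    rewrite Rmin_left, Rmax_right by lra. intros x Hx. rewrite rt_eq, rho_one; lra. }
  assert (Ch : F t - F (t - 1) = RInt rt (t - 1) t).
  { unfold F. rewrite <- (RInt_Chasles rt 0 (t-1) t) by apply rt_int.
    unfold plus; simpl. ring. }
  rewrite P1 in E. unfold Phi in E. rewrite Ch, rt_eq in E by lra. lra.
Qed.

Lemma rho_mono_step (n : nat) :
  (1 <= INR n) ->
  (forall x, 0 <= x <= INR n -> 0 <= rho x) ->
  (forall x y, 0 <= x -> x <= y -> y <= INR n -> rho y <= rho x) ->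
  (forall x y, 0 <= x -> x <= y -> y <= INR n + 1 -> rho y <= rho x) /\
  (forall x, 0 <= x <= INR n + 1 -> 0 <= rho x).
Proof.
  intros Hn Hpos Hmon.
  assert (Hm : forall x y, 0 <= x -> x <= y -> y <= INR n + 1 -> rho y <= rho x).
  { intros x y Hx Hxy Hy.
    destruct (Rle_dec y 1). rewrite !rho_one by lra. lra.
    set (x' := Rmax x 1).
    assert (rho x' <= rho x).
    { unfold x'. destruct (Rle_dec x 1). rewrite Rmax_right by lra. rewrite !rho_one by lra. lra.
      rewrite Rmax_left by lra. lra. }
    assert (x' <= y) by (unfold x'; apply Rmax_lub; lra).
    assert (1 <= x') by (unfold x'; apply Rmax_r).
    destruct (Req_dec x' y). subst y. lra.
    destruct (MVT_gen rho x' y (fun c => - rho (c - 1) / c)) as [c [Hc E]].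
    - rewrite Rmin_left, Rmax_right by lra. intros c Hc. apply rho_deriv. lra.
    - rewrite Rmin_left, Rmax_right by lra. intros c Hc. apply rho_cont. lra.
    - rewrite Rmin_left, Rmax_right in Hc by lra.
      assert (0 <= rho (c - 1)) by (apply Hpos; lra).
      assert (0 <= rho (c - 1) / c) by (apply Rdiv_le_0_compat; lra).
      assert (rho y - rho x' <= 0).
      { rewrite E. assert (0 <= y - x') by lra.
        replace (- rho (c - 1) / c) with (- (rho (c - 1) / c)) by (field; lra). nra. }
      lra. }
  split; auto.
  intros t Ht. destruct (Rle_dec t (INR n)). apply Hpos; lra.
  assert (I := ident t ltac:(lra)).
  rewrite <- (RInt_Chasles rt (t - 1) (INR n) t) in I by apply rt_int.
  assert (I1 : (INR n - (t - 1)) * rho (INR n) <= RInt rt (t - 1) (INR n)).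
  { replace ((INR n - (t - 1)) * rho (INR n)) with (RInt (fun _ => rho (INR n)) (t - 1) (INR n)).
    apply RInt_le. lra. apply ex_RInt_const. apply rt_int.
    intros x Hx. rewrite rt_eq by lra. apply Hmon; lra.
    rewrite RInt_const. unfold scal; simpl; unfold mult; simpl; ring. }
  assert (I2 : (t - INR n) * rho t <= RInt rt (INR n) t).
  { replace ((t - INR n) * rho t) with (RInt (fun _ => rho t) (INR n) t).
    apply RInt_le. lra. apply ex_RInt_const. apply rt_int.
    intros x Hx. rewrite rt_eq by lra. apply Hm; lra.
    rewrite RInt_const. unfold scal; simpl; unfold mult; simpl; ring. }
  unfold plus in I; simpl in I.
  assert (0 <= rho (INR n)) by (apply Hpos; lra).
  assert (0 <= (INR n + 1 - t) * rho (INR n)) by (apply Rmult_le_pos; lra).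
  assert (INR n * rho t >= 0) by nra.
  nra.
Qed.

Lemma rho_good (n : nat) :
  (forall x, 0 <= x <= INR (S n) -> 0 <= rho x) /\
  (forall x y, 0 <= x -> x <= y -> y <= INR (S n) -> rho y <= rho x).
Proof.
  induction n.
  - simpl. split. intros; rewrite rho_one; lra. intros; rewrite !rho_one; lra.
  - destruct IHn as [H1 H2].
    assert (1 <= INR (S n)) by (rewrite S_INR; pose proof (pos_INR n); lra).
    destruct (rho_mono_step (S n) H H1 H2) as [A B].
    rewrite (S_INR (S n)). split; auto.
Qed.

Lemma rho_nonneg x : 0 <= x -> 0 <= rho x.
Proof. intros Hx. destruct (nat_above x) as [n Hn].
  apply (proj1 (rho_good n)). rewrite S_INR; lra. Qed.

Lemma rho_mono x y : 0 <= x -> x <= y -> rho y <= rho x.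
Proof. intros Hx Hxy. destruct (nat_above y) as [n Hn].
  apply (proj2 (rho_good n)); auto. rewrite S_INR; lra. Qed.

Lemma rt_ge0 x : 0 <= rt x.
Proof. unfold rt. destruct (Rle_dec 0 x). apply rho_nonneg; auto. lra. Qed.

Lemma pieces (m : nat) (b : R) (p : nat) : (0 < INR m) ->
  0 <= b - INR p / INR m ->
  RInt rt (b - INR p / INR m) b <= / INR m * sumR (fun i => rho (b - INR (i + 1) / INR m)) p.
Proof.
  intros Hm. induction p; intros Hb.
  - simpl. replace (b - 0 / INR m) with b by (field; lra). rewrite RInt_point. unfold zero; simpl; lra.
  - cbn [sumR]. rewrite S_INR in *.
    assert (0 <= / INR m) by (apply Rlt_le, Rinv_0_lt_compat; lra).
    assert (INR p / INR m <= (INR p + 1) / INR m).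
    { unfold Rdiv. apply Rmult_le_compat_r; lra. }
    assert (0 <= b - INR p / INR m) by lra.
    specialize (IHp H1).
    rewrite <- (RInt_Chasles rt _ (b - INR p / INR m) b) by apply rt_int.
    unfold plus; simpl.
    assert (RInt rt (b - (INR p + 1) / INR m) (b - INR p / INR m) <= / INR m * rho (b - INR (p + 1) / INR m)).
    { rewrite plus_INR. simpl INR.
      replace (/ INR m * rho (b - (INR p + 1) / INR m)) with
        (RInt (fun _ => rho (b - (INR p + 1) / INR m)) (b - (INR p + 1) / INR m) (b - INR p / INR m)).
      apply RInt_le. lra. apply rt_int. apply ex_RInt_const.
      intros x Hx. rewrite rt_eq by lra. apply rho_mono; lra.
      rewrite RInt_const. unfold scal; simpl; unfold mult; simpl. field. lra. }
    lra.
Qed.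

Lemma grid (m k : nat) : (1 <= m)%nat -> (m <= k)%nat ->
  INR k * rho (INR k / INR m) <= sumR (fun i => rho (INR (k - (i + 1)) / INR m)) m.
Proof.
  intros Hm Hk. assert (Hm' : 0 < INR m) by (apply lt_0_INR; lia).
  assert (Hkm : INR m <= INR k) by (apply le_INR; auto).
  assert (E : INR k / INR m - INR m / INR m = INR k / INR m - 1) by (field; lra).
  pose proof (pieces m (INR k / INR m) m Hm').
  rewrite E in H. 
  assert (1 <= INR k / INR m).
  { apply (Rmult_le_reg_r (INR m)); auto. unfold Rdiv. rewrite Rmult_assoc, Rinv_l; lra. }
  rewrite <- ident in H by lra.
  assert (H' : INR k / INR m * rho (INR k / INR m) <= / INR m * sumR (fun i => rho (INR k / INR m - INR (i + 1) / INR m)) m) by (apply H; lra).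
  rewrite (sumR_ext _ (fun i => rho (INR (k - (i + 1)) / INR m))) in H'.
  2:{ intros i Hi. f_equal. rewrite minus_INR by lia. field. lra. }
  apply (Rmult_le_compat_l (INR m)) in H'; [|lra].
  replace (INR m * (INR k / INR m * rho (INR k / INR m))) with (INR k * rho (INR k / INR m)) in H' by (field; lra).
  replace (INR m * (/ INR m * sumR (fun i : nat => rho (INR (k - (i + 1)) / INR m)) m)) with
    (sumR (fun i : nat => rho (INR (k - (i + 1)) / INR m)) m) in H' by (field; lra).
  auto.
Qed.
End Rho.

Lemma exp_le' x y : x <= y -> exp x <= exp y.
Proof. intros H; destruct (Rle_lt_or_eq_dec _ _ H). apply Rlt_le, exp_increasing; auto. subst; lra. Qed.

Lemma exp_pow' x n : exp x ^ n = exp (INR n * x).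
Proof. induction n. simpl. rewrite Rmult_0_l, exp_0; auto.
  rewrite S_INR. simpl. rewrite IHn, <- exp_plus. f_equal; ring. Qed.

Lemma cnt m k : sumR (fun i => if (i + 1 <=? k)%nat then 1 else 0) m = INR (Nat.min m k).
Proof. induction m; cbn [sumR]. simpl; auto. rewrite IHm.
  destruct (Nat.leb_spec (m+1) k).
  - replace (Nat.min (S m) k) with (S (Nat.min m k)) by lia. rewrite S_INR; auto.
  - replace (Nat.min (S m) k) with (Nat.min m k) by lia. ring. Qed.

Lemma rho_term_bound rho (Hd : is_dickman rho) (m : nat) : (1 <= m)%nat ->
  forall k z, 0 <= z -> rho (INR k / INR m) * z ^ k <= exp (sumR (fun i => z ^ (i+1) / INR (i+1)) m).
Proof.
  intros Hm k z Hz.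
  assert (Hm' : 0 < INR m) by (apply lt_0_INR; lia).
  set (r := fun k => rho (INR k / INR m)).
  assert (Hr : forall k, 0 <= r k).
  { intros; apply (rho_nonneg rho Hd). apply Rdiv_le_0_compat; auto. apply pos_INR. }
  assert (Hsmall : forall j, (j <= m)%nat -> r j = 1).
  { intros j Hj. unfold r. apply (rho_one rho Hd). split. apply Rdiv_le_0_compat; auto. apply pos_INR.
    apply (Rmult_le_reg_r (INR m)); auto. unfold Rdiv. rewrite Rmult_assoc, Rinv_l by lra.
    rewrite Rmult_1_l, Rmult_1_r. apply le_INR; auto. }
  eapply Rle_trans; [|apply (gf_bound r m Hr)].
  - instantiate (1 := S k). unfold PP. cbn [sumR].
    pose proof (sumR_nonneg (fun k => r k * z ^ k) k ltac:(intros; apply Rmult_le_pos; auto; apply pow_le; auto)).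
    fold (r k). lra.
  - rewrite Hsmall; [lra|lia].
  - intros j. destruct (le_lt_dec m j).
    + unfold Tw. rewrite (sumR_ext _ (fun i => rho (INR (j - (i + 1)) / INR m))).
      apply grid; auto.
      intros i Hi. destruct (Nat.leb_spec (i+1) j); [reflexivity|lia].
    + rewrite Hsmall by lia. unfold Tw.
      rewrite (sumR_ext _ (fun i => if (i + 1 <=? j)%nat then 1 else 0)).
      rewrite cnt. replace (Nat.min m j) with j by lia. lra.
      intros i Hi. destruct (Nat.leb_spec (i+1) j); auto. apply Hsmall. lia.
  - auto.
Qed.

Lemma geom a m : (exp a - 1) * sumR (fun i => exp (a * INR (i+1))) m = exp (a * INR (m+1)) - exp a.
Proof. induction m; cbn [sumR].
  - simpl. rewrite Rmult_1_r. ring.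
  - rewrite Rmult_plus_distr_l, IHm.
    replace (a * INR (S m + 1)) with (a + a * INR (m + 1)).
    2:{ rewrite !plus_INR, !S_INR. simpl. ring. }
    rewrite exp_plus. replace (m+1)%nat with (S m) by lia. ring. Qed.

Lemma div_le a b c d : 0 <= a <= c -> 0 < d <= b -> a / b <= c / d.
Proof. intros. unfold Rdiv. apply Rmult_le_compat; try lra.
  apply Rlt_le, Rinv_0_lt_compat; lra. apply Rinv_le_contravar; lra. Qed.

Lemma geom_bound a m : 0 < a -> sumR (fun i => exp (a * INR (i+1))) m <= exp (a * (INR m + 1)) / (exp a - 1).
Proof. intros Ha. assert (1 + a < exp a) by (apply exp_ineq1; lra).
  apply (Rmult_le_reg_l (exp a - 1)). lra. rewrite geom.
  replace ((exp a - 1) * (exp (a * (INR m + 1)) / (exp a - 1))) with (exp (a * (INR m + 1))) by (field; lra).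
  rewrite plus_INR. simpl. pose proof (exp_pos a). lra. Qed.

Lemma Qbound s d m L : 0 < s -> 0 < d < 1 -> 0 < L -> L + s <= s * INR m <= L + 2 * s ->
  sumR (fun i => exp s ^ (i+1) / INR (i+1)) m <=
  exp (L + 3 * s) / ((1 - d) * L) + exp (L + 5 * s / 2 - d * L / 2) / (exp (s / 2) - 1).
Proof.
  intros Hs Hd HL HM.
  set (M := INR m) in *.
  assert (HM0 : 0 < M) by nra.
  set (c1 := / ((1 - d) * M)). set (c2 := exp (s / 2 * ((1 - d) * M))).
  assert (Hc1 : 0 < c1) by (apply Rinv_0_lt_compat; nra).
  assert (T : forall i, (i < m)%nat -> exp s ^ (i+1) / INR (i+1) <=
      c1 * exp (s * INR (i+1)) + c2 * exp (s / 2 * INR (i+1))).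
  { intros i Hi. rewrite exp_pow'. rewrite (Rmult_comm (INR (i+1)) s).
    set (j := INR (i+1)). assert (Hj : 1 <= j) by (unfold j; rewrite plus_INR; simpl; pose proof (pos_INR i); lra).
    pose proof (exp_pos (s * j)). pose proof (exp_pos (s / 2 * j)). assert (0 < c2) by apply exp_pos.
    destruct (Rle_dec ((1 - d) * M) j).
    - assert (exp (s * j) / j <= c1 * exp (s * j)).
      { replace (c1 * exp (s * j)) with (exp (s * j) / ((1 - d) * M)) by (unfold c1, Rdiv; ring).
        apply div_le; nra. }
      nra.
    - assert (exp (s * j) / j <= exp (s * j)).
      { unfold Rdiv. rewrite <- (Rmult_1_r (exp (s * j))) at 2. apply Rmult_le_compat_l. lra.
        rewrite <- Rinv_1. apply Rinv_le_contravar; lra. }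
      assert (exp (s * j) <= c2 * exp (s / 2 * j)).
      { unfold c2. rewrite <- exp_plus. apply exp_le'. nra. }
      assert (0 <= c1 * exp (s * j)) by nra. lra. }
  eapply Rle_trans. apply sumR_le. apply T.
  rewrite sumR_plus, !sumR_scal.
  assert (G1 := geom_bound s m Hs). assert (G2 := geom_bound (s/2) m ltac:(lra)). fold M in G1, G2.
  assert (E1 : 1 + s < exp s) by (apply exp_ineq1; lra).
  assert (E2 : 1 + s/2 < exp (s/2)) by (apply exp_ineq1; lra).
  apply Rplus_le_compat.
  - apply Rle_trans with (c1 * (exp (s * (M + 1)) / (exp s - 1))).
    apply Rmult_le_compat_l; lra.
    unfold c1. replace (/ ((1 - d) * M) * (exp (s * (M + 1)) / (exp s - 1))) with
      (exp (s * (M + 1)) / ((1 - d) * ((exp s - 1) * M))) by (field; split; nra).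
    apply div_le. split. apply Rlt_le, exp_pos. apply exp_le'. nra.
    split. nra. apply Rmult_le_compat_l. lra. nra.
  - apply Rle_trans with (c2 * (exp (s / 2 * (M + 1)) / (exp (s / 2) - 1))).
    apply Rmult_le_compat_l. apply Rlt_le, exp_pos. auto.
    unfold c2. unfold Rdiv. rewrite <- Rmult_assoc, <- exp_plus.
    apply Rmult_le_compat_r. apply Rlt_le, Rinv_0_lt_compat; lra.
    apply exp_le'. assert (d * (s * M) >= d * L) by nra. nra.
Qed.

Lemma T2bound Mc d eta L : 0 < Mc -> 0 < d -> 0 < eta -> 0 < L ->
  Mc * exp L * / exp (d * L / 2) <= eta / 2 * exp L / L + Mc * exp (32 * Mc / (d * d * eta)).
Proof.
  intros HM Hd He HL.
  set (L0 := 32 * Mc / (d * d * eta)).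
  set (X := exp (d * L / 2)). set (A := exp L).
  assert (HA : 0 < A) by apply exp_pos.
  assert (HX : (d * L) * (d * L) / 16 <= X).
  { unfold X. replace (d * L / 2) with (d * L / 4 + d * L / 4) by field.
    rewrite exp_plus. pose proof (exp_ineq1_le (d * L / 4)).
    assert (0 < d * L) by nra. nra. }
  assert (HX1 : 1 <= X) by (unfold X; pose proof (exp_ineq1_le (d * L / 2)); assert (0 < d * L) by nra; lra).
  assert (HXp : 0 < X) by lra.
  assert (0 < eta / 2 * A / L) by (apply Rdiv_lt_0_compat; nra).
  assert (0 < Mc * exp L0) by (apply Rmult_lt_0_compat; auto; apply exp_pos).
  destruct (Rle_dec L0 L).
  - assert (Mc * A * / X <= eta / 2 * A / L); [|lra].
    assert (0 < d * L) by nra.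
    assert (Hdl : 0 < (d * L) * (d * L) / 16) by nra.
    apply Rle_trans with (Mc * A * / ((d * L) * (d * L) / 16)).
    { apply Rmult_le_compat_l. nra. apply Rinv_le_contravar; auto. }
    unfold L0 in r.
    assert (32 * Mc <= L * (d * d * eta)).
    { apply (Rmult_le_compat_r (d * d * eta)) in r. 2:{ assert (0 < d * d) by nra. nra. }
      replace (32 * Mc / (d * d * eta) * (d * d * eta)) with (32 * Mc) in r by (field; split; lra). lra. }
    replace (Mc * A * / (d * L * (d * L) / 16)) with ((16 * Mc / (d * d * L)) * (A / L)) by (field; split; lra).
    replace (eta / 2 * A / L) with ((eta / 2) * (A / L)) by (field; lra).
    apply Rmult_le_compat_r. apply Rdiv_le_0_compat; lra.
    apply (Rmult_le_reg_r (d * d * L)). assert (0 < d * d) by nra. nra.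
    replace (16 * Mc / (d * d * L) * (d * d * L)) with (16 * Mc) by (field; split; lra). nra.
  - assert (Mc * A * / X <= Mc * exp L0); [|lra].
    assert (A <= exp L0) by (apply exp_le'; lra).
    assert (/ X <= 1) by (rewrite <- Rinv_1; apply Rinv_le_contravar; lra).
    assert (0 < / X) by (apply Rinv_0_lt_compat; lra).
    apply Rle_trans with (Mc * A). rewrite <- (Rmult_1_r (Mc * A)) at 2.
    apply Rmult_le_compat_l; nra. apply Rmult_le_compat_l; lra.
Qed.

Lemma core (eta : R) : 0 < eta <= 1 ->
  exists C : R, 0 < C /\
  forall rho : R -> R, is_dickman rho ->
  forall A : R, 2 <= A ->
    ex_series (fun n : nat => A ^ (S n) * rho (INR (S n))) /\
    Series (fun n : nat => A ^ (S n) * rho (INR (S n)))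
      <= C * exp ((1 + eta) * A / ln A).
Proof.
  intros He.
  set (d := eta / 8).
  set (s := ln (1 + d) / 3).
  assert (Hs : 0 < s).
  { unfold s. assert (0 < ln (1 + d)). { rewrite <- ln_1. apply ln_increasing; unfold d; lra. } lra. }
  assert (E3 : exp (3 * s) = 1 + d).
  { unfold s. replace (3 * (ln (1 + d) / 3)) with (ln (1 + d)) by field. apply exp_ln. unfold d; lra. }
  assert (Es : 1 + s < exp s) by (apply exp_ineq1; lra).
  assert (Es2 : 1 + s/2 < exp (s/2)) by (apply exp_ineq1; lra).
  set (Mc := exp (5 * s / 2) / (exp (s / 2) - 1)).
  assert (HMc : 0 < Mc) by (apply Rdiv_lt_0_compat; [apply exp_pos|lra]).
  set (K := Mc * exp (32 * Mc / (d * d * eta))).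
  exists (exp K / (exp s - 1)). split. apply Rdiv_lt_0_compat; [apply exp_pos|lra].
  intros rho Hd A HA.
  set (L := ln A).
  assert (HL : 0 < L). { unfold L; rewrite <- ln_1. apply ln_increasing; lra. }
  assert (EL : exp L = A) by (apply exp_ln; lra).
  set (U := up (L / s)).
  assert (HU : L / s < IZR U <= L / s + 1) by (destruct (archimed (L / s)); unfold U; lra).
  assert (HU0 : (0 <= U)%Z). { apply le_IZR. assert (0 < L / s) by (apply Rdiv_lt_0_compat; lra). lra. }
  set (m := S (Z.to_nat U)).
  assert (Hm1 : (1 <= m)%nat) by (unfold m; lia).
  assert (HmR : INR m = IZR U + 1).
  { unfold m. rewrite S_INR, INR_IZR_INZ, Z2Nat.id; auto. }
  assert (HsL : L / s * s = L) by (field; lra).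
  assert (HsM : L + s <= s * INR m <= L + 2 * s).
  { rewrite HmR. destruct HU as [HU1 HU2].
    apply (Rmult_lt_compat_l s) in HU1; auto. apply (Rmult_le_compat_l s) in HU2; [|lra].
    rewrite (Rmult_comm s (L / s)), HsL in HU1. rewrite Rmult_plus_distr_l, (Rmult_comm s (L/s)), HsL in HU2.
    split; lra. }
  set (Q := sumR (fun i => exp s ^ (i+1) / INR (i+1)) m).
  assert (HQ : Q <= (1 + eta) * A / L + K).
  { unfold Q. eapply Rle_trans. apply (Qbound s d m L); auto. unfold d; lra.
    assert (T1 : exp (L + 3 * s) / ((1 - d) * L) <= (1 + eta / 2) * A / L).
    { rewrite exp_plus, EL, E3.
      replace (A * (1 + d) / ((1 - d) * L)) with ((1 + d) / (1 - d) * (A / L)) by (field; unfold d; split; lra).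
      replace ((1 + eta / 2) * A / L) with ((1 + eta / 2) * (A / L)) by (field; lra).
      apply Rmult_le_compat_r. apply Rdiv_le_0_compat; lra.
      apply (Rmult_le_reg_r (1 - d)). unfold d; lra.
      replace ((1 + d) / (1 - d) * (1 - d)) with (1 + d) by (field; unfold d; lra).
      unfold d. nra. }
    assert (T2 : exp (L + 5 * s / 2 - d * L / 2) / (exp (s / 2) - 1) <= eta / 2 * exp L / L + K).
    { unfold K. eapply Rle_trans; [|apply T2bound; auto; unfold d; lra].
      right. unfold Mc. unfold Rminus. rewrite !exp_plus, exp_Ropp. field. split. apply Rgt_not_eq, exp_pos. lra. }
    rewrite EL in T2.
    replace ((1 + eta) * A / L) with ((1 + eta / 2) * A / L + eta / 2 * A / L) by (field; lra).
    lra. }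
  set (a := fun n : nat => A ^ (S n) * rho (INR (S n))).
  set (q := / exp s).
  assert (Hq : 0 < q < 1).
  { unfold q. split. apply Rinv_0_lt_compat, exp_pos. rewrite <- Rinv_1. apply Rinv_lt_contravar; lra. }
  set (b := fun n : nat => scal (exp Q * q) (q ^ n)).
  assert (Hab : forall n, 0 <= a n <= b n).
  { intros n. assert (0 <= rho (INR (S n))) by (apply (rho_nonneg rho Hd), pos_INR).
    assert (0 < A ^ S n) by (apply pow_lt; lra).
    split. unfold a; nra.
    pose proof (rho_term_bound rho Hd m Hm1 (S n * m) (exp s) (Rlt_le _ _ (exp_pos s))) as HT.
    fold Q in HT.
    replace (INR (S n * m) / INR m) with (INR (S n)) in HT.
    2:{ rewrite mult_INR. field. apply not_0_INR; lia. }
    rewrite Nat.mul_comm, pow_mult in HT.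
    assert (Hz : A * exp s <= exp s ^ m).
    { rewrite exp_pow', <- EL, <- exp_plus. apply exp_le'. lra. }
    assert (HZ : (A * exp s) ^ S n <= (exp s ^ m) ^ S n).
    { apply pow_incr. split; auto. pose proof (exp_pos s); nra. }
    rewrite Rpow_mult_distr in HZ.
    assert (HsN : 0 < exp s ^ S n) by (apply pow_lt, exp_pos).
    assert (a n * exp s ^ S n <= exp Q).
    { unfold a. eapply Rle_trans; [|apply HT].
      replace (A ^ S n * rho (INR (S n)) * exp s ^ S n) with (rho (INR (S n)) * (A ^ S n * exp s ^ S n)) by ring.
      apply Rmult_le_compat_l; auto. }
    unfold b, scal; simpl; unfold mult; simpl.
    replace (exp Q * q * q ^ n) with (exp Q * q ^ S n) by (simpl; ring).
    unfold q. rewrite pow_inv.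
    apply (Rmult_le_reg_r (exp s ^ S n)); auto.
    rewrite Rmult_assoc, Rinv_l by lra. lra. }
  assert (Hb : is_series b (exp Q * q * / (1 - q))).
  { unfold b. apply (is_series_scal (exp Q * q) (fun n => q ^ n)). apply is_series_geom.
    rewrite Rabs_pos_eq; lra. }
  assert (Hexa : ex_series a).
  { apply (ex_series_le a b). intros n. change (norm (a n)) with (Rabs (a n)).
    rewrite Rabs_pos_eq; apply Hab. eexists; apply Hb. }
  split. exact Hexa.
  fold a. eapply Rle_trans. apply Series_le. apply Hab. eexists; apply Hb.
  rewrite (is_series_unique b _ Hb).
  replace (exp Q * q * / (1 - q)) with (exp Q / (exp s - 1)).
  2:{ unfold q. assert (exp s <> 0) by (apply Rgt_not_eq, exp_pos).
      replace (1 - / exp s) with ((exp s - 1) / exp s) by (field; auto).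
      field. split; auto. lra. }
  fold L.
  replace (exp K / (exp s - 1) * exp ((1 + eta) * A / L)) with (exp ((1 + eta) * A / L + K) / (exp s - 1)).
  2:{ rewrite exp_plus. field. lra. }
  apply div_le. split. apply Rlt_le, exp_pos. apply exp_le'; lra. split; lra.
Qed.

Theorem lemma2p1 :
  forall eta : R, 0 < eta ->
  exists C : R, 0 < C /\
  forall rho : R -> R, is_dickman rho ->
  forall A : R, 2 <= A ->
    ex_series (fun n : nat => A ^ (S n) * rho (INR (S n))) /\
    Series (fun n : nat => A ^ (S n) * rho (INR (S n)))
      <= C * exp ((1 + eta) * A / ln A).
Proof.
  intros eta He.
  destruct (core (Rmin eta 1)) as [C [HC H]].
  { split. apply Rmin_pos; lra. apply Rmin_r. }
  exists C. split; auto. intros rho Hd A HA. destruct (H rho Hd A HA) as [H1 H2].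
  split; auto. eapply Rle_trans; [apply H2|].
  apply Rmult_le_compat_l; [lra|]. apply exp_le'.
  assert (0 < ln A). { rewrite <- ln_1. apply ln_increasing; lra. }
  unfold Rdiv. apply Rmult_le_compat_r. apply Rlt_le, Rinv_0_lt_compat; auto.
  apply Rmult_le_compat_r. lra. pose proof (Rmin_l eta 1). lra.
Qed.
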